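(* Let $A$ be a real $3\times3$ matrix whose only eigenvalue is $\lambda$ (with algebraic multiplicity $3$), and let $h>0$. If $\lambda=0$, set $\psi=1$, $\phi=h$, $\theta=\tfrac12$. If $\lambda\neq0$, set $$\phi=(h-\lambda h^2)e^{\lambda h},\qquad \theta=\frac{h^2e^{\lambda h}}{2\phi^2},\qquad \psi=e^{\lambda h}-\lambda\phi-\theta\phi^2\lambda^2.$$ Then (whenever these expressions are defined) the explicit difference scheme $$\frac{\mathbf{x}_{k+1}-\psi\mathbf{x}_k}{\phi}=A\mathbf{x}_k+\theta\phi A^2\mathbf{x}_k$$ is exact for the system $\mathbf{x}'=A\mathbf{x}$.
   Context: A one-step difference scheme with step size $h>0$ for $\mathbf{x}'=M\mathbf{x}$ is called exact if for every initial vector $\mathbf{x}_0$ the sequence $(\mathbf{x}_k)$ it generates satisfies $\mathbf{x}_k=\mathbf{x}(kh)$ for all $k\ge 0$, where $\mathbf{x}(t)$ solves $\mathbf{x}'=M\mathbf{x}$, $\mathbf{x}(0)=\mathbf{x}_0$. *)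

(* Defs.v *)
From HB Require Import structures.
From mathcomp Require Import all_boot all_order all_algebra.
From mathcomp Require Import all_classical all_reals all_analysis.
Set Implicit Arguments. Unset Strict Implicit. Unset Printing Implicit Defensive.
Import Order.TTheory GRing.Theory Num.Theory.
Import numFieldNormedType.Exports.
Local Open Scope ring_scope.

Definition is_ode_solution (R : realType) (n : nat) (M : 'M[R]_n)
  (x0 : 'cV[R]_n) (x : R -> 'cV[R]_n) : Prop :=
  x 0 = x0 /\
  forall (t : R) (i : 'I_n) (j : 'I_1),
    is_derive t 1 (fun s : R => x s i j) ((M *m x t) i j).

Definition exact_scheme (R : realType) (n : nat) (h : R) (M : 'M[R]_n)
  (step : 'cV[R]_n -> 'cV[R]_n -> Prop) : Prop :=
  forall (x0 : 'cV[R]_n) (xs : nat -> 'cV[R]_n),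
    xs 0%N = x0 -> (forall k, step (xs k) (xs k.+1)) ->
    forall x : R -> 'cV[R]_n, is_ode_solution M x0 x ->
    forall k : nat, xs k = x (k%:R * h).

Definition phi_par (R : realType) (l h : R) : R :=
  if l == 0 then h else (h - l * h ^+ 2) * expR (l * h).
Definition theta_par (R : realType) (l h : R) : R :=
  if l == 0 then 2^-1 else h ^+ 2 * expR (l * h) / (2 * (phi_par l h) ^+ 2).
Definition psi_par (R : realType) (l h : R) : R :=
  if l == 0 then 1 else
    expR (l * h) - l * phi_par l h - theta_par l h * (phi_par l h) ^+ 2 * l ^+ 2.

Definition nsfd_step (R : realType) (n : nat) (A : 'M[R]_n) (l h : R)
  (xk xk1 : 'cV[R]_n) : Prop :=
  (phi_par l h)^-1 *: (xk1 - psi_par l h *: xk)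
  = A *m xk + (theta_par l h * phi_par l h) *: (A *m (A *m xk)).

(* Main.v *)
Require Import Defs.
From HB Require Import structures.
From mathcomp Require Import all_boot all_order all_algebra.
From mathcomp Require Import all_classical all_reals all_analysis.
From mathcomp Require Import ring lra.
Import Order.TTheory GRing.Theory Num.Theory.
Import numFieldNormedType.Exports.
Local Open Scope ring_scope.

Section Alg.
Variable R : realType.
Variable N : 'M[R]_3.
Hypothesis N3 : N ^+ 3 = 0.

Definition qp (a0 a1 a2 : R) : {poly R} := a0%:P + a1%:P * 'X + a2%:P * 'X^2.
Definition Q a0 a1 a2 := horner_mx N (qp a0 a1 a2).

Lemma QD a0 a1 a2 b0 b1 b2 : Q a0 a1 a2 + Q b0 b1 b2 = Q (a0+b0) (a1+b1) (a2+b2).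
Proof. rewrite /Q -rmorphD; congr horner_mx; rewrite /qp !polyCD; ring. Qed.

Lemma QZ c a0 a1 a2 : c *: Q a0 a1 a2 = Q (c*a0) (c*a1) (c*a2).
Proof.
rewrite /Q -horner_mxZ; congr horner_mx; rewrite -mul_polyC /qp !polyCM; ring.
Qed.

Lemma Qmul a0 a1 a2 b0 b1 b2 : Q a0 a1 a2 * Q b0 b1 b2 =
  Q (a0*b0) (a0*b1+a1*b0) (a0*b2+a1*b1+a2*b0).
Proof.
rewrite /Q -rmorphM.
have -> : qp a0 a1 a2 * qp b0 b1 b2 = qp (a0*b0) (a0*b1+a1*b0) (a0*b2+a1*b1+a2*b0)
   + 'X^3 * ((a1*b2 + a2*b1)%:P + (a2*b2)%:P * 'X).
  by rewrite /qp !polyCD !polyCM; ring.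
rewrite rmorphD rmorphM rmorphXn -[X in X ^+ 3 * _]/(horner_mx N 'X) horner_mx_X N3 mul0r addr0. done.
Qed.

Lemma QE a0 a1 a2 i k : Q a0 a1 a2 i k =
  a0 * (i == k)%:R + a1 * N i k + a2 * (N *m N) i k.
Proof.
rewrite /Q /qp !rmorphD !rmorphM /= !horner_mx_C.
rewrite horner_mx_X -!mulmxE !mul_scalar_mx !mxE /= mulr_natr.
done.
Qed.

End Alg.
Arguments qp {R}.
Arguments Q {R} N a0 a1 a2.
Arguments QD {R} N.
Arguments QZ {R} N.
Arguments Qmul {R} N N3.
Arguments QE {R} N.

Lemma dexp (R : realType) (a c0 c1 c2 t : R) :
  is_derive t 1 (fun s => expR (a*s) * (c0 + c1*s + c2*s^+2))
   (a * expR (a*t) * (c0 + c1*t + c2*t^+2) + expR (a*t) * (c1 + 2*c2*t)).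
Proof.
have h1 : is_derive t 1 (fun s : R => expR (a*s)) (expR (a*t) * a).
  apply: (@is_derive1_comp _ expR (fun s => a * s)).
  apply: is_derive_eq; rewrite /GRing.scale /= ?mulr1 //.
have h2 : is_derive t 1 (fun s : R => c0 + c1*s + c2*s^+2) (c1 + 2*c2*t).
  apply: is_derive_eq; rewrite /GRing.scale /= ?mulr1. ring.
have h := is_deriveM h1 h2.
apply: (is_derive_eq h).
rewrite /GRing.scale /=. ring.
Qed.

Lemma QC (R : realType) (N : 'M[R]_3) a : Q N a 0 0 = a%:M.
Proof. by rewrite /Q /qp !polyC0 !mul0r !addr0 horner_mx_C. Qed.

Lemma dmulmx (R : realType) (F : R -> 'M[R]_3) (x : R -> 'cV[R]_3) (t : R) (F' : 'M[R]_3) (x' : 'cV[R]_3) :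
 (forall i k, is_derive t 1 (fun s => F s i k) (F' i k)) ->
 (forall k, is_derive t 1 (fun s => x s k 0) (x' k 0)) ->
 forall i, is_derive t 1 (fun s => (F s *m x s) i 0) ((F' *m x t + F t *m x') i 0).
Proof.
move=> hF hx i.
have -> : (fun s => (F s *m x s) i 0) = \sum_(k < 3) (fun s => F s i k * x s k 0).
  by apply: funext => s; rewrite fct_sumE mxE.
rewrite !mxE -big_split; apply: is_derive_sum => k /=.
have h := is_deriveM (hF i k) (hx k).
apply: (is_derive_eq h).
rewrite /GRing.scale /=. ring.
Qed.

Theorem mainTheorem14 (R : realType) (A : 'M[R]_3) (l h : R) :
  char_poly A = ('X - l%:P) ^+ 3 ->
  0 < h ->
  phi_par l h != 0 ->
  exact_scheme h A (nsfd_step A l h).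
Proof.
move=> hchar hh hphi x0 xs hx0 hstep x [hx0' hder] k.
set N := A - l%:M.
have N3 : N ^+ 3 = 0.
  have := Cayley_Hamilton A; rewrite hchar rmorphXn rmorphB /= horner_mx_X horner_mx_C; exact.
have AQ : A = Q N l 1 0.
  apply/matrixP => i j; rewrite QE /N !mxE mul1r mul0r addr0 mulr_natr; ring.
pose E (t : R) := expR (l * t) *: Q N 1 t (t ^+ 2 / 2).
pose G (t : R) := expR (- l * t) *: Q N 1 (- t) (t ^+ 2 / 2).
have EM : forall s t, E s * E t = E (s + t).
  move=> s t; rewrite /E -scalerAl -scalerAr scalerA (Qmul N N3) -expRD mulrDr.
  by congr (_ *: Q N _ _ _); field.
have GE : forall t, E t * G t = 1.
  move=> t; rewrite /E /G -scalerAl -scalerAr scalerA (Qmul N N3) -expRD.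
  have -> : l * t + - l * t = 0 by ring.
  rewrite expR0 scale1r.
  have -> : Q N (1 * 1) (1 * - t + t * 1) (1 * (t ^+ 2 / 2) + t * - t + t ^+ 2 / 2 * 1) = Q N 1 0 0.
    by congr Q; field.
  by rewrite QC.
have G0 : G 0 = 1.
  rewrite /G mulr0 expR0 scale1r oppr0 expr0n /= mul0r.
  by rewrite QC.
have Gd : forall (t : R) (i : 'I_3), is_derive t 1 (fun s => (G s *m x s) i 0) 0.
  move=> t i.
  pose F' := expR (- l * t) *: Q N (- l) (l * t - 1) (t - l * t ^+ 2 / 2).
  have hF : forall (i k : 'I_3), is_derive t 1 (fun s => G s i k) (F' i k).
    move=> i' k'.
    have -> : (fun s => G s i' k') = (fun s => expR ((- l) * s) *
        ((i' == k')%:R + (- N i' k') * s + ((N *m N) i' k' / 2) * s ^+ 2)).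
      by apply: funext => s; rewrite /G mxE QE; congr (_ * _); field.
    have := dexp R (- l) ((i' == k')%:R) (- N i' k') ((N *m N) i' k' / 2) t.
    move/is_derive_eq; apply.
    by rewrite /F' [RHS]mxE QE; field.
  have := @dmulmx R G x t F' (A *m x t) hF (fun k => hder t k 0) i.
  move/is_derive_eq; apply.
  rewrite mulmxA -mulmxDl.
  have -> : F' + G t *m A = 0.
    rewrite AQ /F' /G -scalemxAl mulmxE (Qmul N N3) -scalerDr QD.
    have -> : Q N (- l + 1 * l) (l * t - 1 + (1 * 1 + - t * l))
      (t - l * t ^+ 2 / 2 + (1 * 0 + - t * 1 + t ^+ 2 / 2 * l)) = Q N 0 0 0.
      by congr Q; field.
    by rewrite QC raddf0 scaler0.
  by rewrite mul0mx mxE.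
have xsol : forall t, x t = E t *m x0.
  move=> t.
  have yc : G t *m x t = x0.
    apply/matrixP => i j; rewrite (ord1 j).
    rewrite (@is_derive_0_is_cst R (fun u => (G u *m x u) i 0) t 0 (fun u => Gd u i)) G0 hx0' mul1mx //.
  by rewrite -yc mulmxA mulmxE GE mul1mx.
have EhS : E h = (psi_par l h)%:M + phi_par l h *: A
    + (phi_par l h * (theta_par l h * phi_par l h)) *: (A * A).
  rewrite AQ -(QC _ N) (Qmul N N3) !QZ !QD /E QZ.
  have [l0|l0] := eqVneq l 0.
    rewrite /psi_par /theta_par /phi_par l0 eqxx mul0r expR0.
    by congr Q; field.
  rewrite /psi_par /theta_par (negbTE l0).
  have hpE : phi_par l h = (h - l * h ^+ 2) * expR (l * h) by rewrite /phi_par (negbTE l0).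
  move: hphi; rewrite hpE => hp.
  have [ha hb] : h - l * h ^+ 2 != 0 /\ expR (l * h) != 0.
    by move: hp; rewrite mulf_eq0 negb_or => /andP.
  by congr Q; field; rewrite ha hb.
have xsk : forall k, xs k = E (k%:R * h) *m x0.
  elim=> [|n IH]; first by rewrite hx0 mul0r /E mulr0 expR0 scale1r expr0n /= mul0r QC mul1mx.
  have := hstep n; rewrite /nsfd_step => H.
  have H2 : xs n.+1 - psi_par l h *: xs n = phi_par l h *: (A *m xs n +
     (theta_par l h * phi_par l h) *: (A *m (A *m xs n))).
    by rewrite -H scalerA mulfV // scale1r.
  move/eqP: H2; rewrite subr_eq => /eqP ->.
  rewrite -[n.+1]addn1 natrD mulrDl mul1r [_ + h]addrC -EM -mulmxE -mulmxA -IH EhS.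
  rewrite !mulmxDl mul_scalar_mx -!scalemxAl -mulmxE -mulmxA scalerDr scalerA.
  by rewrite addrC addrA.
by rewrite xsk xsol.
Qed.
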